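(* Let $N\ge 1$, let $q$ be an indeterminate and $z_1,\dots,z_N$ indeterminates, and put $\delta=(N-1,N-2,\dots,0)$. Then $$\prod_{1\le i<j\le N}(z_i-q^{-2}z_j)=\sum_{w\in S_N}(-q^{-2})^{\ell(w)}z^{w(\delta)}+\sum_{\gamma}a_{\gamma}\,z_1^{\gamma_1}z_2^{\gamma_2}\cdots z_N^{\gamma_N},$$ where the second sum is finite, and for each monomial $z_1^{\gamma_1}\cdots z_N^{\gamma_N}$ occurring in it there exist $i\neq j$ with $\gamma_i=\gamma_j$, and its coefficient satisfies $a_\gamma\in\mathbb{Z}[q^{-2}]$ and $a_\gamma(1)=0$ (i.e. $a_\gamma$ vanishes at $q^{-2}=1$).
   Context: $S_N$ is the symmetric group on $\{1,\dots,N\}$ and $\ell(w)$ is the number of inversions of $w$, i.e. the number of pairs $i<j$ with $w(i)>w(j)$. For $w\in S_N$, $z^{w(\delta)}$ denotes the monomial $\prod_{i=1}^N z_{w(i)}^{\,N-i}$. *)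

(* Defs.v *)
From HB Require Import structures.
From mathcomp Require Import all_boot all_order all_algebra all_fingroup.
From mathcomp Require Import mpoly.
Set Implicit Arguments. Unset Strict Implicit. Unset Printing Implicit Defensive.
Import GRing.Theory.
Local Open Scope ring_scope.

Definition ell (N : nat) (w : 'S_N) : nat :=
  #|[set p : 'I_N * 'I_N | (p.1 < p.2)%N && (w p.2 < w p.1)%N]|.

(* Coefficient ring Z[t], t := q^{-2}; polynomials in z_0..z_{N-1}. *)
Notation coefR := {poly int}.

Definition lhsP (N : nat) : {mpoly coefR[N]} :=
  \prod_(i < N) \prod_(j < N | (i < j)%N) ('X_i - (polyX int) *: 'X_j).

(* z^{w(delta)} = prod_i z_{w(i)}^{N-1-i} (0-indexed) *)
Definition zwdelta (N : nat) (w : 'S_N) : {mpoly coefR[N]} :=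
  \prod_(i < N) 'X_(w i) ^+ (N - 1 - i)%N.

Definition mainSum (N : nat) : {mpoly coefR[N]} :=
  \sum_(w : 'S_N) ((- polyX int) ^+ ell w) *: zwdelta w.

(* Main.v *)
Require Import Defs.
From HB Require Import structures.
From mathcomp Require Import all_boot all_order all_algebra all_fingroup.
From mathcomp Require Import mpoly.
From mathcomp Require Import zify.
Import GRing.Theory.
Local Open Scope ring_scope.

Section Tour.
Variable N : nat.
Definition lt2 (p : 'I_N * 'I_N) : bool := (p.1 < p.2)%N.
Definition cc (p : 'I_N * 'I_N) (b : bool) : coefR :=
  if lt2 p then (if b then 1 else - 'X) else (if b then 1 else 0).
Definition mu (p : 'I_N * 'I_N) (b : bool) : 'X_{1..N} :=
  if lt2 p then (if b then U_(p.1) else U_(p.2))%MM else 0%MM.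
Definition kf (f : {ffun 'I_N * 'I_N -> bool}) := \prod_p cc p (f p).
Definition mon (f : {ffun 'I_N * 'I_N -> bool}) : 'X_{1..N} := (\sum_p mu p (f p))%MM.
Definition win (f : {ffun 'I_N * 'I_N -> bool}) p : 'I_N := if f p then p.1 else p.2.

Lemma lhsP_expand : lhsP N = \sum_(f : {ffun 'I_N * 'I_N -> bool}) kf f *: 'X_[mon f].
Proof.
rewrite /lhsP pair_big_dep /= big_mkcond /=.
transitivity (\prod_(p : 'I_N * 'I_N) \sum_(b : bool) (cc p b *: 'X_[mu p b])).
  apply: eq_bigr => p _; rewrite big_bool /cc /mu /lt2.
  case: ifP => _ /=; rewrite ?scale1r ?scale0r ?addr0 ?mpolyX0 //.
  by rewrite scaleNr.
rewrite bigA_distr_bigA; apply: eq_bigr => f _.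
by rewrite scaler_prod mprodXE.
Qed.

Lemma lhsP_coef m : (lhsP N)@_m = \sum_(f : {ffun 'I_N * 'I_N -> bool}) kf f * (mon f == m)%:R.
Proof.
rewrite lhsP_expand raddf_sum; apply: eq_bigr => f _ /=.
by rewrite mcoeffZ mcoeffX.
Qed.

Lemma monE f k : mon f k = (\sum_p (if lt2 p then (win f p == k : nat) else 0))%N.
Proof.
rewrite /mon mnm_sumE; apply: eq_bigr => p _; rewrite /mu /win.
by case: ifP => _; case: (f p); rewrite ?mnm1E ?mnm0E.
Qed.

Lemma weight f (g : 'I_N -> nat) :
  (\sum_k g k * mon f k = \sum_p (if lt2 p then g (win f p) else 0))%N.
Proof.
under eq_bigr do rewrite monE big_distrr.
rewrite exchange_big; apply: eq_bigr => p _ /=.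
case: ifP => _; last by rewrite big1 // => k _; rewrite muln0.
rewrite (bigD1 (win f p)) //= eqxx muln1 big1 ?addn0 // => k /negbTE.
by rewrite eq_sym => ->; rewrite muln0.
Qed.


Lemma sum_nat_eqP (I : finType) (a b : I -> nat) :
  (forall i, a i <= b i)%N -> (\sum_i b i <= \sum_i a i)%N -> forall i, a i = b i.
Proof.
move=> hab hs i; apply/eqP; rewrite eqn_leq hab /=; apply: contraLR hs.
rewrite -ltnNge -ltnNge => hi.
rewrite (bigD1 i) //= [X in (_ < X)%N](bigD1 i) //=.
have : (\sum_(j | j != i) a j <= \sum_(j | j != i) b j)%N by apply: leq_sum.
lia.
Qed.

Lemma sum_perm_U (s : 'S_N) (g : 'I_N -> nat) k :
  ((\sum_i U_(s i) *+ g i)%MM k = g (s^-1 k)%g)%N.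
Proof.
rewrite mnm_sumE (bigD1 (s^-1 k)%g) //= mulmnE mnm1E permKV eqxx mul1n.
rewrite big1 ?addn0 // => i hi; rewrite mulmnE mnm1E.
case: eqP => // e; case/eqP: hi; by rewrite -e permK.
Qed.

Section Inj.
Variable m : 'X_{1..N}.
Hypothesis minj : injective (fun k : 'I_N => m k).

Definition fs : {ffun 'I_N * 'I_N -> bool} :=
  [ffun p => if lt2 p then (m p.2 < m p.1)%N else true].
Definition rk k := #|[set j | (m j < m k)%N]|.

Lemma neq_lt2 (p : 'I_N * 'I_N) : lt2 p -> m p.1 <> m p.2.
Proof. by move=> h /minj e; move: h; rewrite /lt2 e ltnn. Qed.

Lemma mon_fs k : mon fs k = rk k.
Proof.
pose H (p : 'I_N * 'I_N) := ((p.1 == k) && (m p.2 < m p.1)%N : nat).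
transitivity (\sum_p ((if lt2 p then H p else 0) + (if lt2 p then H (p.2, p.1) else 0)))%N.
  rewrite monE; apply: eq_bigr => -[a b] _ /=; rewrite /win /fs ffunE /H /=.
  case hab : (lt2 (a, b)) => //=; have ne := neq_lt2 (a, b) hab.
  case: ltngtP => h; rewrite ?andbF ?andbT /= ?addn0 ?add0n //.
  by move: ne; rewrite h.
transitivity (\sum_p ((if lt2 p then H p else 0) + (if lt2 (p.2, p.1) then H p else 0)))%N.
  rewrite !big_split /=; congr (_ + _)%N.
  rewrite [RHS](reindex_inj (h := fun p : 'I_N * 'I_N => (p.2, p.1))) /=; last first.
    by move=> [a b] [c d] /= [-> ->].
  by apply: eq_bigr => -[a b].
transitivity (\sum_p H p)%N.
  apply: eq_bigr => -[a b] _; rewrite /lt2 /H /=.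
  case: ltngtP => h //=; rewrite ?addn0 //.
  have e : a = b by apply: val_inj.
  by rewrite e ltnn andbF.
rewrite (eq_bigr (fun p => H (p.1, p.2))); last by case.
rewrite -(pair_bigA _ (fun i j => H (i, j))) /=.
rewrite (bigD1 k) //= [X in (_ + X)%N]big1 ?addn0; last first.
  by move=> i hi; rewrite big1 // => j _; rewrite /H /= (negbTE hi).
rewrite /rk -sum1_card [RHS]big_mkcond /=; apply: eq_bigr => j _.
by rewrite /H /= eqxx inE.
Qed.

Lemma rk_le k : (rk k <= m k)%N.
Proof.
rewrite /rk cardE -(size_map (fun j : 'I_N => m j)) -[X in (_ <= X)%N](size_iota 0).
apply: uniq_leq_size; first by rewrite map_inj_uniq ?enum_uniq.
move=> x /mapP [j]; rewrite mem_enum inE => hj ->.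
by rewrite mem_iota.
Qed.

Lemma rk_lt k : (rk k < N)%N.
Proof.
have hN : (0 < N)%N by apply: leq_ltn_trans (ltn_ord k).
apply: (@leq_ltn_trans #|[set~ k]|).
  apply: subset_leq_card; apply/subsetP => j; rewrite !inE.
  by apply: contraTneq => ->; rewrite ltnn.
by rewrite cardsC1 card_ord prednK.
Qed.

Lemma card_ord_lt a : (a <= N)%N -> #|[set i : 'I_N | (i < a)%N]| = a.
Proof.
move=> ha.
have -> : [set i : 'I_N | (i < a)%N] = [set widen_ord ha i | i : 'I_a].
  apply/setP => i; rewrite inE; apply/idP/imsetP.
    by move=> hi; exists (Ordinal hi) => //; apply: val_inj.
  by case=> j _ ->; rewrite /= ltn_ord.
by rewrite card_imset ?card_ord // => x y /(congr1 val) /= /val_inj.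
Qed.

Lemma rk_exact : (forall k, m k < N)%N -> forall k, rk k = m k.
Proof.
move=> hm k.
pose pi (j : 'I_N) := Ordinal (hm j).
have piinj : injective pi by move=> x y /(congr1 val) /= /minj.
have e : [set j | (m j < m k)%N] = pi @^-1: [set i : 'I_N | (i < m k)%N].
  by apply/setP => j; rewrite !inE.
by rewrite /rk e card_preimset // card_ord_lt // ltnW.
Qed.

Lemma fs_unique g : kf g != 0 -> mon g = m -> g = fs /\ forall k, rk k = m k.
Proof.
move=> kg hg.
have e1 := weight g (fun k => m k).
have e2 := weight fs (fun k => m k).
rewrite hg in e1.
have le1 : (\sum_k m k * mon fs k <= \sum_k m k * m k)%N.
  by apply: leq_sum => k _; rewrite mon_fs leq_mul2l rk_le orbT.
have teq := @sum_nat_eqP _ (fun p => if lt2 p then m (win g p) else 0%N)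
                 (fun p => if lt2 p then m (win fs p) else 0%N).
have hab : forall p, ((if lt2 p then m (win g p) else 0) <= (if lt2 p then m (win fs p) else 0))%N.
  move=> p; case hp: (lt2 p) => //; rewrite /win /fs ffunE hp.
  by case: (g p); case: (ltnP (m p.2) (m p.1)) => h //=; lia.
have hs : (\sum_p (if lt2 p then m (win fs p) else 0) <= \sum_p (if lt2 p then m (win g p) else 0))%N.
  by rewrite -e1 -e2.
have {}teq := teq hab hs.
have geq : g = fs.
  apply/ffunP => p; have := teq p => /=.
  case hp : (lt2 p); last first.
    move=> _; rewrite /fs ffunE hp; apply: contraNT kg => gp.
    by rewrite /kf (bigD1 p) //= /cc hp (negbTE gp) mul0r.
  rewrite /win /fs ffunE hp.
  have ne := neq_lt2 p hp.
  by case: (g p); case: (ltnP (m p.2) (m p.1)) => h //= hh; exfalso; apply: ne; lia.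
split => // k; rewrite -mon_fs -geq hg //.
Qed.

Lemma kf_fs : kf fs = (- 'X) ^+ #|[set p | lt2 p && (m p.1 < m p.2)%N]|.
Proof.
rewrite /kf -prodr_const [RHS]big_mkcond /=; apply: eq_bigr => p _.
rewrite /cc /fs ffunE inE.
case hp: (lt2 p) => //=; have ne := neq_lt2 p hp.
by case: (ltnP (m p.2) (m p.1)) => h; [rewrite ltnNge (ltnW h) | have -> : (m p.1 < m p.2)%N by lia].
Qed.

End Inj.

Definition md (w : 'S_N) : 'X_{1..N} := (\sum_i U_(w i) *+ (N - 1 - i))%MM.

Lemma zwdeltaE w : zwdelta w = 'X_[md w].
Proof. by rewrite /zwdelta mprodXnE. Qed.

Lemma mdE w k : md w k = (N - 1 - (w^-1)%g k)%N.
Proof. exact: (sum_perm_U w (fun i : 'I_N => N - 1 - i)%N). Qed.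

Lemma md_lt w k : (md w k < N)%N.
Proof. rewrite mdE; have := ltn_ord k; lia. Qed.

Lemma mainSum_coef m : (mainSum N)@_m = \sum_w (- 'X) ^+ ell w * (md w == m)%:R.
Proof.
rewrite /mainSum raddf_sum; apply: eq_bigr => w _ /=.
by rewrite zwdeltaE mcoeffZ mcoeffX.
Qed.

Lemma md_inj_fun w : injective (fun k => md w k).
Proof.
move=> a b /=; rewrite !mdE => e.
have ha := ltn_ord ((w^-1)%g a); have hb := ltn_ord ((w^-1)%g b).
have : ((w^-1)%g a = (w^-1)%g b :> nat) by lia.
by move/val_inj/perm_inj.
Qed.

Lemma md_inj : injective md.
Proof.
move=> w1 w2 e; apply: invg_inj; apply/permP => k.
have := congr1 (fun mm : 'X_{1..N} => mm k) e; rewrite /= !mdE => e'.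
have ha := ltn_ord ((w1^-1)%g k); have hb := ltn_ord ((w2^-1)%g k).
have h : (nat_of_ord ((w1^-1)%g k) = nat_of_ord ((w2^-1)%g k)) by lia.
exact: val_inj h.
Qed.

Lemma md_ex (m : 'X_{1..N}) : injective (fun k => m k) -> (forall k, m k < N)%N ->
  exists w, md w = m.
Proof.
move=> minj hm.
have hv : forall k : 'I_N, (N - 1 - m k < N)%N by move=> k; have := hm k; lia.
pose v (k : 'I_N) := Ordinal (hv k).
have vinj : injective v.
  move=> a b /(congr1 val) /= e; apply: minj => /=.
  have := hm a; have := hm b; lia.
exists ((perm vinj)^-1)%g; apply/mnmP => k; rewrite mdE invgK permE /=.
have := hm k; lia.
Qed.

Lemma ell_md w : #|[set p | lt2 p && (md w p.1 < md w p.2)%N]| = ell w.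
Proof.
pose psi (p : 'I_N * 'I_N) := ((w^-1)%g p.2, (w^-1)%g p.1).
have psiinj : injective psi.
  by move=> [a b] [c d] [/perm_inj -> /perm_inj ->].
rewrite /ell -[RHS](card_preimset _ psiinj); apply: eq_card => -[a b].
rewrite !inE /lt2 /= !mdE !permKV.
have ha := ltn_ord ((w^-1)%g a); have hb := ltn_ord ((w^-1)%g b).
rewrite andbC; congr (_ && _); apply/idP/idP; lia.
Qed.


Lemma coef_inj (m : 'X_{1..N}) : injective (fun k => m k) ->
  (lhsP N)@_m = (mainSum N)@_m.
Proof.
move=> minj.
case: (boolP [exists w, md w == m]) => [/existsP [w /eqP hw] | hno].
- rewrite mainSum_coef (bigD1 w) //= hw eqxx mulr1 big1 ?addr0; last first.
    move=> w' hw'; case: eqP => [e|]; last by rewrite mulr0.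
    by case/eqP: hw'; apply: md_inj; rewrite e hw.
  have hlt : forall k, (m k < N)%N by move=> k; rewrite -hw md_lt.
  have hmon : mon (fs m) = m.
    by apply/mnmP => k; rewrite (mon_fs m minj) (rk_exact m minj hlt).
  rewrite lhsP_coef (bigD1 (fs m)) //= hmon eqxx mulr1 (kf_fs m minj) -hw ell_md hw.
  rewrite big1 ?addr0 // => g hg.
  case: (eqVneq (kf g) 0) => [->|kg]; first by rewrite mul0r.
  case: eqP => [e|]; last by rewrite mulr0.
  by have [e' _] := fs_unique m minj g kg e; case/eqP: hg.
- rewrite mainSum_coef big1; last first.
    move=> w _; case: eqP => [e|]; last by rewrite mulr0.
    by case/existsP: hno; exists w; rewrite e.
  rewrite lhsP_coef big1 // => g _.
  case: (eqVneq (kf g) 0) => [->|kg]; first by rewrite mul0r.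
  case: eqP => [e|]; last by rewrite mulr0.
  have [_ hr] := fs_unique m minj g kg e.
  have hlt : forall k, (m k < N)%N by move=> k; rewrite -hr rk_lt.
  have [w hw] := md_ex m minj hlt.
  by case/existsP: hno; exists w; rewrite hw.
Qed.


Lemma perm_mon_inj (s : 'S_N) (mm : 'X_{1..N}) :
  (\sum_i U_(s i) *+ i)%MM = mm -> injective (fun k => mm k).
Proof.
move=> <- x y /=.
rewrite (sum_perm_U s (fun i : 'I_N => nat_of_ord i) x).
rewrite (sum_perm_U s (fun i : 'I_N => nat_of_ord i) y).
by move/val_inj/perm_inj.
Qed.

Lemma lhsP_eval1 (m : 'X_{1..N}) : ~ injective (fun k => m k) -> ((lhsP N)@_m).[1] = 0.
Proof.
move=> ninj.
have -> : ((lhsP N)@_m).[1] = (map_mpoly (horner_eval (1:int)) (lhsP N))@_m.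
  by rewrite mcoeff_map_mpoly.
rewrite /lhsP rmorph_prod.
under eq_bigr do rewrite rmorph_prod.
pose a : 'rV[{mpoly int[N]}]_N := \row_j 'X_j.
pose c : int := \prod_(i < N) \prod_(j < N | (i < j)%N) (-1).
have -> : \prod_(i < N) \prod_(j < N | (i < j)%N)
     (map_mpoly (horner_eval (1:int)) ('X_i - 'X *: 'X_j) : {mpoly int[N]})
   = c *: \det (Vandermonde N a).
  rewrite det_Vandermonde /c -scaler_prod; apply: eq_bigr => i _.
  rewrite -scaler_prod; apply: eq_bigr => j _.
  rewrite rmorphB /= map_mpolyZ !map_mpolyX /= horner_evalE hornerX scale1r.
  by rewrite !mxE scaleN1r opprB.
rewrite mcoeffZ [\det _]/determinant raddf_sum big1 ?mulr0 // => s _ /=.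
rewrite (eq_bigr (fun i => 'X_(s i) ^+ i)); last by move=> i _; rewrite !mxE.
rewrite mprodXnE.
case: (odd_perm s); rewrite ?expr1 ?expr0 ?mulN1r ?mul1r ?mcoeffN mcoeffX;
  case: eqP => [he|_]; rewrite ?oppr0 //; exfalso; apply: ninj.
all: exact: (perm_mon_inj _ _ he).
Qed.

End Tour.

Theorem mainTheorem1 (N : nat) (hN : (0 < N)%N) :
  exists R : {mpoly {poly int}[N]},
    lhsP N = mainSum N + R /\
    forall m : 'X_{1..N}, m \in msupp R ->
      (exists i j : 'I_N, i != j /\ m i = m j) /\ (R@_m).[1] = 0.
Proof.
exists (lhsP N - mainSum N); split; first by rewrite addrC subrK.
move=> m; rewrite mcoeff_msupp mcoeffB => hne.
case: (boolP [exists i, exists j, (i != j) && (m i == m j)]) =>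
  [/existsP [i /existsP [j /andP [hij /eqP e]]] | h].
- have ms0 : (mainSum N)@_m = 0.
    rewrite (mainSum_coef N) big1 // => w _; case: eqP => [he|]; last by rewrite mulr0.
    by case/eqP: hij; apply: (md_inj_fun N w); rewrite /= he.
  split; first by exists i, j.
  rewrite ms0 subr0; apply: (lhsP_eval1 N) => minj; case/eqP: hij; exact: minj e.
- exfalso; move: hne; rewrite (coef_inj N) ?subrr ?eqxx //.
  move=> x y /= hxy; apply/eqP; apply: contraNT h => hne'.
  by apply/existsP; exists x; apply/existsP; exists y; rewrite hne' hxy eqxx.
Qed.
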